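(* Let $(I,J,\emptyset)$ be a reduced presentation with $J\neq\emptyset$, and let $\mathcal Q=\mathcal Q[I,J]$. If $I{\downarrow}\cap J{\downarrow}\supsetneq\{1\}$, then $\mathcal Q$ is not primitive.
   Context: $\mathbf Q(\mathcal K)=\mathbf{ISPP}_u(\mathcal K)$. $\mathbf{\L}_n$ is the Wajsberg hoop on $\{0,\dots,n\}$ with $ab=\max\{a+b-n,0\}$, $a\to b=\min\{n-a+b,n\}$; $\mathbf{\L}_{n,k}$ is the Wajsberg hoop on $\{(r,s)\in\mathbb Z^2:(0,0)\le(r,s)\le(n,k)\}$ (lexicographic order) with the analogous operations using componentwise addition and $u=(n,k)$. $X{\downarrow}$ = set of divisors of elements of $X$. A presentation $(I,J,\emptyset)$ is reduced if $I\cup J\ne\emptyset$, no $m\in I$ divides any element of $(I\setminus\{m\})\cup J$, and no $n\in J$ divides any element of $J\setminus\{n\}$. $\mathcal Q[I,J]=\mathbf Q(\{\mathbf{\L}_i:i\in I\}\cup\{\mathbf{\L}_{j,1}:j\in J\})$. A quasivariety is primitive if every subquasivariety $\mathcal Q'$ satisfies $\mathcal Q'=\mathbf H(\mathcal Q')\cap\mathcal Q$, equivalently every subquasivariety is structural (structural: for every subquasivariety $\mathcal Q''$, $\mathbf H(\mathcal Q'')=\mathbf H(\mathcal Q')$ implies $\mathcal Q''=\mathcal Q'$). *)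

(* Defs.v *)
From mathcomp Require Import all_boot all_order all_algebra.
From mathcomp Require Import zify.
Set Implicit Arguments. Unset Strict Implicit. Unset Printing Implicit Defensive.
Import Order.TTheory GRing.Theory Num.Theory.

Record hoopalg := HoopAlg {
  carrier :> Type;
  hmul : carrier -> carrier -> carrier;
  himp : carrier -> carrier -> carrier;
  hone : carrier }.

Definition hclass := hoopalg -> Prop.

Definition ultrafilter (Idx : Type) (U : (Idx -> Prop) -> Prop) : Prop :=
  [/\ U (fun _ => True),
      ~ U (fun _ => False),
      (forall S T : Idx -> Prop, U S -> (forall i, S i -> T i) -> U T),
      (forall S T : Idx -> Prop, U S -> U T -> U (fun i => S i /\ T i)) &
      (forall S : Idx -> Prop, U S \/ U (fun i => ~ S i))].

(* Q(K) = ISPP_u(K): A is (isomorphic to) a subalgebra of a direct product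
   (indexed by X) of ultraproducts (the x-th one indexed by Idx x, with
   ultrafilter U x) of members of K.  The map f picks representatives:
   the induced map A -> prod_x (prod_i B x i / U x) is a homomorphism
   (the equations hold U x-almost everywhere) and is injective. *)
Definition Qgen (K : hclass) : hclass := fun A =>
  exists (X : Type) (Idx : X -> Type)
         (U : forall x, (Idx x -> Prop) -> Prop)
         (B : forall x, Idx x -> hoopalg)
         (f : A -> forall x (i : Idx x), B x i),
    (forall x, ultrafilter (U x)) /\ (forall x i, K (B x i)) /\
    [/\
        (forall (a b : A) x,
           U x (fun i => f (hmul a b) x i = hmul (f a x i) (f b x i))),
        (forall (a b : A) x,
           U x (fun i => f (himp a b) x i = himp (f a x i) (f b x i))),
        (forall x, U x (fun i => f (hone A) x i = hone (B x i))) &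
        (forall a b : A,
           (forall x, U x (fun i => f a x i = f b x i)) -> a = b)].

Definition hhom (A B : hoopalg) (h : A -> B) : Prop :=
  [/\ (forall a b, h (hmul a b) = hmul (h a) (h b)),
      (forall a b, h (himp a b) = himp (h a) (h b)) &
      h (hone A) = hone B].

Definition Hop (C : hclass) : hclass := fun A =>
  exists (B : hoopalg) (h : B -> A), C B /\ hhom h /\ (forall a, exists b, h b = a).

Definition is_quasivariety (C : hclass) : Prop := forall A, C A <-> Qgen C A.

Definition subquasivariety (C' C : hclass) : Prop :=
  is_quasivariety C' /\ (forall A, C' A -> C A).

Definition primitive (C : hclass) : Prop :=
  forall C', subquasivariety C' C -> forall A, C' A <-> (Hop C' A /\ C A).

Lemma luk_mul_lt (n : nat) (a b : 'I_n.+1) : (a + b - n < n.+1)%N.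
Proof. have := ltn_ord a; have := ltn_ord b; lia. Qed.

Lemma luk_imp_lt (n : nat) (a b : 'I_n.+1) : (minn (n - a + b) n < n.+1)%N.
Proof. lia. Qed.

Definition Luk (n : nat) : hoopalg :=
  @HoopAlg 'I_n.+1
    (fun a b => Ordinal (luk_mul_lt a b))         (* max(a+b-n,0) *)
    (fun a b => Ordinal (luk_imp_lt a b))
    ord_max.

(* The Wajsberg hoop L_{n,k} on {(r,s) in Z^2 : (0,0) <= (r,s) <= (n,k)}
   with the lexicographic order. *)
Local Open Scope ring_scope.

Definition lexle (p q : int * int) : bool :=
  (p.1 < q.1) || ((p.1 == q.1) && (p.2 <= q.2)).
Definition lexmax (p q : int * int) := if lexle p q then q else p.
Definition lexmin (p q : int * int) := if lexle p q then p else q.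
Definition padd (p q : int * int) : int * int := (p.1 + q.1, p.2 + q.2).
Definition psub (p q : int * int) : int * int := (p.1 - q.1, p.2 - q.2).

Definition lukk_top (n k : nat) : int * int := ((n : int), (k : int)).
Definition in_lukk (n k : nat) (p : int * int) : bool :=
  lexle (0, 0) p && lexle p (lukk_top n k).

Definition lukk_car (n k : nat) := {p : int * int | in_lukk n k p}.

Lemma lukk_mul_in (n k : nat) (a b : lukk_car n k) :
  in_lukk n k (lexmax (psub (padd (val a) (val b)) (lukk_top n k)) (0, 0)).
Proof.
case: a b => [[r s] /= Ha] [[r' s'] /= Hb].
move: Ha Hb; rewrite /in_lukk /lexmax /lexle /padd /psub /lukk_top /=.
case: ifP => /=; lia.
Qed.

Lemma lukk_imp_in (n k : nat) (a b : lukk_car n k) :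
  in_lukk n k (lexmin (padd (psub (lukk_top n k) (val a)) (val b)) (lukk_top n k)).
Proof.
case: a b => [[r s] /= Ha] [[r' s'] /= Hb].
move: Ha Hb; rewrite /in_lukk /lexmin /lexle /padd /psub /lukk_top /=.
case: ifP => /=; lia.
Qed.

Lemma lukk_top_in (n k : nat) : in_lukk n k (lukk_top n k).
Proof. rewrite /in_lukk /lexle /lukk_top /=; lia. Qed.

Definition Lukk (n k : nat) : hoopalg :=
  @HoopAlg (lukk_car n k)
    (fun a b => exist (in_lukk n k) _ (lukk_mul_in a b))
    (fun a b => exist (in_lukk n k) _ (lukk_imp_in a b))
    (exist (in_lukk n k) _ (lukk_top_in n k)).

Local Close Scope ring_scope.

(* Presentations (I, J, emptyset), with I, J finite sets of positive
   integers represented by sequences (only membership matters).        *)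
Definition reduced (I J : seq nat) : Prop :=
  [/\ I ++ J <> [::],
      (forall m, m \in I -> forall x,
          ((x \in I) && (x != m)) || (x \in J) -> ~~ (m %| x)) &
      (forall n, n \in J -> forall x, (x \in J) && (x != n) -> ~~ (n %| x))].

Definition divdown (X : seq nat) (d : nat) : Prop := exists2 x, x \in X & d %| x.

Definition QIJ (I J : seq nat) : hclass :=
  Qgen (fun A => (exists2 i, i \in I & A = Luk i) \/
                 (exists2 j, j \in J & A = Lukk j 1)).

(* Main.v *)
Require Import Defs.
From mathcomp Require Import all_boot all_order all_algebra zify ring.
From Stdlib Require Import ClassicalEpsilon Classical.
Record rep (K : hclass) (A : hoopalg) := Rep {
  rX : Type;
  rIdx : rX -> Type;
  rU : forall x, (rIdx x -> Prop) -> Prop;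
  rB : forall x, rIdx x -> hoopalg;
  rf : A -> forall x (i : rIdx x), rB x i;
  rUf : forall x, ultrafilter (rU x);
  rK : forall x i, K (rB x i);
  rmul : forall (a b : A) x, rU x (fun i => rf (hmul a b) x i = hmul (rf a x i) (rf b x i));
  rimp : forall (a b : A) x, rU x (fun i => rf (himp a b) x i = himp (rf a x i) (rf b x i));
  rone : forall x, rU x (fun i => rf (hone A) x i = hone (rB x i));
  rinj : forall a b : A, (forall x, rU x (fun i => rf a x i = rf b x i)) -> a = b }.

Arguments rX {K A}. Arguments rIdx {K A}. Arguments rU {K A}. Arguments rB {K A}.
Arguments rf {K A}. Arguments rUf {K A}. Arguments rK {K A}. Arguments rmul {K A}.
Arguments rimp {K A}. Arguments rone {K A}. Arguments rinj {K A}.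
Set Implicit Arguments. Unset Strict Implicit. Unset Printing Implicit Defensive.
Import Order.TTheory GRing.Theory Num.Theory.

Fixpoint pw (A : hoopalg) (a : A) (n : nat) : A :=
  match n with 0 => a | n'.+1 => hmul a (pw a n') end.

Local Open Scope ring_scope.

Fixpoint Qs (n : nat) (x : int * int) (k : nat) : int * int :=
  match k with 0 => x | k'.+1 => padd (Qs n x k') (psub x (lukk_top n 1)) end.

Lemma Qs2 n x k : (Qs n x k).2 = (k.+1 : int) * x.2 - (k : int).
Proof.
elim: k => [|k IH] /=; first by rewrite mul1r subr0.
rewrite IH /lukk_top /=.
have ->: (k.+2:int) = (k:int) + 1 + 1 by lia.
have ->: (k.+1:int) = (k:int) + 1 by lia.
ring.
Qed.

Lemma pw_val n (x : Lukk n 1) k : val (pw x k) = lexmax (Qs n (val x) k) (0, 0).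
Proof.
elim: k => [|k IH] /=.
  case: x => [[r s] /= H]; move: H; rewrite /in_lukk /lexmax /lexle /=.
  case: ifP => //= ?? ; congr pair; lia.
rewrite IH {IH}; case: x => [[r s] /= H]; move: H.
case: (Qs n (r, s) k) => q1 q2.
rewrite [lexmax (q1,q2) _]/lexmax; case: ifP => E.
all: rewrite /in_lukk /lexmax /lexle /padd /psub /lukk_top /= in E *.
all: move=> H.
all: repeat case: ifP => /= ?; try (congr pair; lia); lia.
Qed.

Lemma lukk_qi n (x : Lukk n.+2 1) :
  pw x n.+2 = pw x n.+1 -> himp x (pw x n.+1) = pw x n -> x = hone (Lukk n.+2 1).
Proof.
move=> H1 H2.
have E1 : lexmax (Qs n.+2 (val x) n.+2) (0,0) = lexmax (Qs n.+2 (val x) n.+1) (0,0)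
  by rewrite -!pw_val H1.
have E2 : lexmin (padd (psub (lukk_top n.+2 1) (val x)) (lexmax (Qs n.+2 (val x) n.+1) (0,0)))
   (lukk_top n.+2 1) = lexmax (Qs n.+2 (val x) n) (0,0)
  by rewrite -!pw_val -H2.
have S2 := Qs2 n.+2 (val x) n.+1.
move: E1 E2 S2; clear H1 H2.
case: x => [[r s] /= H] E1 E2 S2.
suff E : (r, s) = lukk_top n.+2 1.
  move: H; rewrite E => H; congr exist; exact: bool_irrelevance.
move: E1 E2 S2 => /=.
case: (Qs n.+2 (r, s) n) => q1 q2.
move: H; rewrite /in_lukk /lexmax /lexmin /lexle /padd /psub /lukk_top /=.
move=> H.
repeat case: ifP => /= ?; move=> E1 E2 S2; try (case: E1 => ??); try (case: E2 => ??); try (congr pair; lia); try lia.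
have hs : (n.+2 : int) * s = n.+1 by lia.
have [hs0|hs1] : s <= 0 \/ 1 <= s by lia.
  have : (n.+2 : int) * s <= 0 by apply: mulr_ge0_le0.
  lia.
have : (n.+2 : int) * 1 <= (n.+2 : int) * s by rewrite ler_pM2l.
lia.
Qed.

Local Close Scope ring_scope.

Definition lukm n : Luk n.+2 := Ordinal (leqnSn n.+2 : n.+1 < n.+3).

Lemma luk_pw n k : val (pw (lukm n) k) = n.+1 - k.
Proof. elim: k => [|k IH] //=; rewrite IH; lia. Qed.

Lemma luk_fail n : let a := lukm n in
  [/\ pw a n.+2 = pw a n.+1, himp a (pw a n.+1) = pw a n & a <> hone (Luk n.+2)].
Proof.
split.
- apply: val_inj; rewrite !luk_pw; lia.
- apply: val_inj; rewrite /= !luk_pw; lia.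
- move=> /(f_equal val) /=; lia.
Qed.



Lemma Qgen_rep K A : Qgen K A -> exists r : rep K A, True.
Proof.
case=> [X [Idx [U [B [f [hU [hK [h1 h2 h3 h4]]]]]]]].
by exists (@Rep K A X Idx U B f hU hK h1 h2 h3 h4).
Qed.

Lemma rep_Qgen K A : rep K A -> Qgen K A.
Proof.
case=> X Idx U B f hU hK h1 h2 h3 h4.
by exists X, Idx, U, B, f; split; [|split].
Qed.

Section UF.
Variables (T : Type) (U : (T -> Prop) -> Prop) (hU : ultrafilter U).
Lemma uf_up (S T' : T -> Prop) : U S -> (forall i, S i -> T' i) -> U T'.
Proof. by case: hU => _ _ h _ _; apply: h. Qed.
Lemma uf_and (S T' : T -> Prop) : U S -> U T' -> U (fun i => S i /\ T' i).
Proof. by case: hU => _ _ _ h _; apply: h. Qed.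
Lemma uf_all (S : T -> Prop) : (forall i, S i) -> U S.
Proof. by case: hU => h _ h' _ _ H; apply: h' h _. Qed.
Lemma uf_false (S : T -> Prop) : U S -> (forall i, ~ S i) -> False.
Proof. move=> HS HF; case: (hU) => _ h _ _ _; apply: h; apply: (uf_up HS) => i /HF []. Qed.
Lemma uf_ultra (S : T -> Prop) : U S \/ U (fun i => ~ S i).
Proof. by case: hU => _ _ _ _ h. Qed.
End UF.

Lemma uf_unit : ultrafilter (fun S : unit -> Prop => S tt).
Proof.
split => //; first by move=> S T' H h; apply: h.
by move=> S; case: (classic (S tt)) => h; [left|right].
Qed.

Lemma Qgen_self (K : hclass) A : K A -> Qgen K A.
Proof.
move=> hK; apply: rep_Qgen.
refine (@Rep K A unit (fun _ => unit) (fun _ S => S tt) (fun _ _ => A)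
  (fun a _ _ => a) (fun _ => uf_unit) (fun _ _ => hK) _ _ _ _) => //.
by move=> a b /(_ tt).
Qed.

Lemma Qgen_emb (K1 K2 : hclass) A :
  (forall B, K1 B -> {B' : hoopalg & {e : B -> B' | K2 B' /\ hhom e /\ injective e}}) ->
  Qgen K1 A -> Qgen K2 A.
Proof.
move=> emb /Qgen_rep [r _]; apply: rep_Qgen.
pose B' x i := projT1 (emb _ (rK r x i)).
pose e x i : rB r x i -> B' x i := proj1_sig (projT2 (emb _ (rK r x i))).
have he x i : K2 (B' x i) /\ hhom (e x i) /\ injective (e x i)
  := proj2_sig (projT2 (emb _ (rK r x i))).
refine (@Rep K2 A (rX r) (rIdx r) (rU r) B' (fun a x i => e x i (rf r a x i))
  (rUf r) (fun x i => proj1 (he x i)) _ _ _ _).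
- move=> a b x; apply: (uf_up (rUf r x) (rmul r a b x)) => i ->.
  by case: (he x i) => _ [[-> _ _] _].
- move=> a b x; apply: (uf_up (rUf r x) (rimp r a b x)) => i ->.
  by case: (he x i) => _ [[_ -> _] _].
- move=> x; apply: (uf_up (rUf r x) (rone r x)) => i ->.
  by case: (he x i) => _ [[_ _ ->] _].
- move=> a b H; apply: (rinj r) => x; apply: (uf_up (rUf r x) (H x)) => i.
  by case: (he x i) => _ [_ /[apply]].
Qed.

Definition ufsum T (J : T -> Type) (U : (T -> Prop) -> Prop)
  (V : forall t, (J t -> Prop) -> Prop) (S : {t : T & J t} -> Prop) : Prop :=
  U (fun t => V t (fun j => S (existT J t j))).

Lemma uf_sum T (J : T -> Type) U V :
  ultrafilter U -> (forall t, ultrafilter (V t)) -> ultrafilter (@ufsum T J U V).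
Proof.
move=> hU hV; split.
- rewrite /ufsum; apply: (uf_all hU) => t; exact: (uf_all (hV t)).
- rewrite /ufsum => H; apply: (uf_false hU H) => t Ht; exact: (uf_false (hV t) Ht (fun _ h => h)).
- rewrite /ufsum => S T' H hST; apply: (uf_up hU H) => t Ht; apply: (uf_up (hV t) Ht) => j; exact: hST.
- rewrite /ufsum => S T' H1 H2; apply: (uf_up hU (uf_and hU H1 H2)) => t [h1 h2].
  exact: (uf_and (hV t) h1 h2).
- rewrite /ufsum => S; case: (uf_ultra hU (fun t => V t (fun j => S (existT J t j)))) => h; first by left.
  right; apply: (uf_up hU h) => t ht.
  by case: (uf_ultra (hV t) (fun j => S (existT J t j))).
Qed.

Lemma Qgen_norm K (k0 : hoopalg) : K k0 -> hmul (hone k0) (hone k0) = hone k0 ->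
  himp (hone k0) (hone k0) = hone k0 ->
  forall B, Qgen K B -> exists r : rep K B, inhabited (rX r).
Proof.
move=> hk hm hi B /Qgen_rep [r _].
case: (classic (inhabited (rX r))) => hX; first by exists r.
have sub : forall a b : B, a = b.
  by move=> a b; apply: (rinj r) => x; case: hX; constructor.
unshelve eexists (@Rep K B unit (fun _ => unit) (fun _ S => S tt) (fun _ _ => k0)
  (fun _ _ _ => hone k0) (fun _ => uf_unit) (fun _ _ => hk) _ _ _ _) => //.
all: try by move=> *; rewrite ?hm ?hi.
all: try by move=> *; apply: sub.
Qed.

Lemma Qgen_Qgen K (k0 : hoopalg) : K k0 -> hmul (hone k0) (hone k0) = hone k0 ->
  himp (hone k0) (hone k0) = hone k0 ->
  forall A, Qgen (Qgen K) A -> Qgen K A.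
Proof.
move=> hk hm hi A /Qgen_rep [r _]; apply: rep_Qgen.
have R : forall x i, {r' : rep K (rB r x i) | inhabited (rX r')}.
  move=> x i; apply: constructive_indefinite_description.
  exact: (Qgen_norm hk hm hi (rK r x i)).
pose R' x i := proj1_sig (R x i).
pose X' := {x : rX r & forall i : rIdx r x, rX (R' x i)}.
pose Idx' (p : X') := {i : rIdx r (projT1 p) & rIdx (R' (projT1 p) i) (projT2 p i)}.
pose U' (p : X') : (Idx' p -> Prop) -> Prop :=
  @ufsum _ (fun i => rIdx (R' (projT1 p) i) (projT2 p i)) (rU r (projT1 p))
     (fun i => rU (R' (projT1 p) i) (projT2 p i)).
pose B' (p : X') (ij : Idx' p) := rB (R' _ (projT1 ij)) (projT2 p (projT1 ij)) (projT2 ij).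
pose f' (a : A) (p : X') (ij : Idx' p) : B' p ij :=
  rf (R' _ (projT1 ij)) (rf r a _ (projT1 ij)) (projT2 p (projT1 ij)) (projT2 ij).
refine (@Rep K A X' Idx' U' B' f' _ _ _ _ _ _).
- move=> p; apply: uf_sum; [exact: rUf | move=> i; exact: rUf].
- by move=> p ij; apply: rK.
- move=> a b [x s]; rewrite /U' /ufsum /=.
  apply: (uf_up (rUf r x) (rmul r a b x)) => i E; rewrite /f' /= E.
  exact: rmul.
- move=> a b [x s]; rewrite /U' /ufsum /=.
  apply: (uf_up (rUf r x) (rimp r a b x)) => i E; rewrite /f' /= E.
  exact: rimp.
- case=> x s; rewrite /U' /ufsum /=.
  apply: (uf_up (rUf r x) (rone r x)) => i E; rewrite /f' /= E.
  exact: rone.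
- move=> a b H; apply: (rinj r) => x.
  apply: NNPP => nP.
  have nU : rU r x (fun i => ~ (rf r a x i = rf r b x i)).
    by case: (uf_ultra (rUf r x) (fun i => rf r a x i = rf r b x i)).
  have hs : forall i, {y : rX (R' x i) | rf r a x i = rf r b x i \/
      ~ rU (R' x i) y (fun j => rf (R' x i) (rf r a x i) y j = rf (R' x i) (rf r b x i) y j)}.
    move=> i; apply: constructive_indefinite_description.
    case: (classic (rf r a x i = rf r b x i)) => hP.
      by case: (proj2_sig (R x i)) => y; exists y; left.
    apply: NNPP => hn; apply: hP; apply: (rinj (R' x i)) => y.
    by apply: NNPP => h; apply: hn; exists y; right.
  have := H (existT _ x (fun i => proj1_sig (hs i))); rewrite /U' /ufsum /= => HU.
  apply: (uf_false (rUf r x) (uf_and (rUf r x) HU nU)) => i [h1 h2].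
  by case: (proj2_sig (hs i)).
Qed.

Local Open Scope ring_scope.
Lemma lukk_emb_in d m (p : lukk_car d 1) : (0 < m)%N ->
  in_lukk (m * d) 1 ((m : int) * (val p).1, (val p).2).
Proof.
case: p => [[r s] /= H] hm; move: H; rewrite /in_lukk /lexle /lukk_top /= PoszM.
move=> H; nia.
Qed.

Lemma lukk_emb d m : (0 < m)%N ->
  {e : Lukk d 1 -> Lukk (m * d) 1 | hhom e /\ injective e}.
Proof.
move=> hm.
exists (fun p => exist (in_lukk (m * d) 1) _ (lukk_emb_in p hm)).
split; first split.
- move=> [[r s] Ha] [[r' s'] Hb]; apply: val_inj => /=.
  move: Ha Hb; rewrite /in_lukk /lexmax /lexle /padd /psub /lukk_top /= !PoszM => Ha Hb.
  repeat case: ifP => /= ?; try (congr pair; nia); nia.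
- move=> [[r s] Ha] [[r' s'] Hb]; apply: val_inj => /=.
  move: Ha Hb; rewrite /in_lukk /lexmin /lexle /padd /psub /lukk_top /= !PoszM => Ha Hb.
  repeat case: ifP => /= ?; try (congr pair; nia); nia.
- apply: val_inj => /=; rewrite /lukk_top /= PoszM; congr pair; nia.
- move=> [[r s] Ha] [[r' s'] Hb] /(f_equal val) /= [E1 E2].
  have E : (r, s) = (r', s') by congr pair; nia.
  move: Ha Hb; rewrite E => Ha Hb; congr exist; exact: bool_irrelevance.
Qed.
Local Close Scope ring_scope.

Lemma luk_emb d m : 0 < m -> {e : Luk d -> Luk (m * d) | hhom e /\ injective e}.
Proof.
move=> hm.
have lt (a : Luk d) : a * m < (m * d).+1.
  have := ltn_ord a; nia.
exists (fun a => Ordinal (lt a)); split; first split.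
- by move=> a b; apply: val_inj => /=; nia.
- by move=> a b; apply: val_inj => /=; nia.
- by apply: val_inj => /=; nia.
- move=> a b /(f_equal val) /= E; apply: val_inj; apply/eqP; rewrite -(eqn_pmul2r hm); apply/eqP; exact: E.
Qed.

Lemma lukk_proj_lt d (p : Lukk d 1) : absz (val p).1 < d.+1.
Proof. case: p => [[r s] /= H]; move: H; rewrite /in_lukk /lexle /lukk_top /=; lia. Qed.

Lemma lukk_proj d : {h : Lukk d 1 -> Luk d | hhom h /\ forall a, exists b, h b = a}.
Proof.
exists (fun p => Ordinal (lukk_proj_lt p)); split; first split.
- move=> [[r s] Ha] [[r' s'] Hb]; apply: val_inj => /=.
  move: Ha Hb; rewrite /in_lukk /lexmax /lexle /padd /psub /lukk_top /= => Ha Hb.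
  repeat case: ifP => /= ?; lia.
- move=> [[r s] Ha] [[r' s'] Hb]; apply: val_inj => /=.
  move: Ha Hb; rewrite /in_lukk /lexmin /lexle /padd /psub /lukk_top /= => Ha Hb.
  repeat case: ifP => /= ?; lia.
- by apply: val_inj.
- move=> a.
  have H : in_lukk d 1 ((nat_of_ord a : int), 0%R).
    rewrite /in_lukk /lexle /lukk_top /=; have := ltn_ord a; lia.
  by exists (exist (in_lukk d 1) _ H); apply: val_inj.
Qed.

Lemma lukk_top_idem d : hmul (hone (Lukk d 1)) (hone (Lukk d 1)) = hone (Lukk d 1) /\
  himp (hone (Lukk d 1)) (hone (Lukk d 1)) = hone (Lukk d 1).
Proof.
split; apply: val_inj; rewrite /= /lexmax /lexmin /lexle /padd /psub /lukk_top /=;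
  repeat case: ifP => /= ?; try (congr pair; lia); lia.
Qed.

Lemma pw_ae K A (r : rep K A) (a : A) x k :
  rU r x (fun i => rf r (pw a k) x i = pw (rf r a x i) k).
Proof.
elim: k => [|k IH] /=; first by apply: (uf_all (rUf r x)).
apply: (uf_up (rUf r x) (uf_and (rUf r x) (rmul r a (pw a k) x) IH)) => i [-> ->].
by [].
Qed.

Lemma lukk_qi' n (B : hoopalg) : B = Lukk n.+2 1 -> forall x : B,
  pw x n.+2 = pw x n.+1 -> himp x (pw x n.+1) = pw x n -> x = hone B.
Proof. move=> ->; exact: lukk_qi. Qed.

Lemma notin n : ~ Qgen (fun B => B = Lukk n.+2 1) (Luk n.+2).
Proof.
move=> /Qgen_rep [r _].
have [F1 F2 F3] := luk_fail n.
apply: F3; apply: (rinj r) => x.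
set a := lukm n.
have hU := rUf r x.
have P := uf_and hU (uf_and hU (@pw_ae _ _ r a x n.+2) (@pw_ae _ _ r a x n.+1))
  (uf_and hU (uf_and hU (@pw_ae _ _ r a x n) (rimp r a (pw a n.+1) x)) (rone r x)).
apply: (uf_up hU P) => i [[E1 E2] [[E3 E4] E5]].
rewrite E5; apply: (lukk_qi' (rK r x i)).
- by rewrite -E1 -E2 F1.
- by rewrite -E2 -E4 F2 E3.
Qed.

Theorem proposition4p13 (I J : seq nat) :
  (forall x, x \in I -> 0 < x) ->
  (forall x, x \in J -> 0 < x) ->
  reduced I J ->
  J <> [::] ->
  (* I{down} /\ J{down} strictly contains {1} *)
  ((forall d, d = 1 -> divdown I d /\ divdown J d) /\
   (exists d, divdown I d /\ divdown J d /\ d <> 1)) ->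
  ~ primitive (QIJ I J).
Proof.
move=> hI hJ _ _ [_ [d [[i iI di] [[j jJ dj] d1]]]].
have i0 := hI i iI; have j0 := hJ j jJ.
have d0 : 0 < d by move: di; case: d {d1 dj} => //; rewrite dvd0n; lia.
have [n En] : exists n, d = n.+2 by exists d.-2; lia.
subst d.
pose C' := Qgen (fun B => B = Lukk n.+2 1).
have [idm idi] := lukk_top_idem n.+2.
have qv : is_quasivariety C'.
  move=> A; split; first exact: Qgen_self.
  exact: (@Qgen_Qgen _ (Lukk n.+2 1) erefl idm idi).
have sub : forall A, C' A -> QIJ I J A.
  move=> A; apply: Qgen_emb => B hB; subst B.
  have hm : 0 < j %/ n.+2 by rewrite divn_gt0 // dvdn_leq.
  exists (Lukk (j %/ n.+2 * n.+2) 1).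
  case: (lukk_emb n.+2 hm) => e [he1 he2]; exists e; split=> //.
  by right; exists j => //; rewrite divnK.
move=> Hprim.
apply: (@notin n); apply: (proj2 (Hprim C' (conj qv sub) (Luk n.+2))).
split.
- case: (lukk_proj n.+2) => h [hh hs].
  exists (Lukk n.+2 1), h; split=> //; exact: Qgen_self.
- have := @Qgen_self (fun B => B = Luk n.+2) (Luk n.+2) erefl.
  apply: Qgen_emb => B hB; subst B.
  have hm : 0 < i %/ n.+2 by rewrite divn_gt0 // dvdn_leq.
  exists (Luk (i %/ n.+2 * n.+2)).
  case: (luk_emb n.+2 hm) => e [he1 he2]; exists e; split=> //.
  by left; exists i => //; rewrite divnK.
Qed.
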